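(* Let $d_{in}, d_V, p, M$ be positive integers and $d_K$ an even positive integer. Fix weights $W_Q, W_K\in\mathbb{R}^{d_{in}\times d_K}$, $W_V\in\mathbb{R}^{d_{in}\times d_V}$, a feature map $\phi:\mathbb{R}^{d_K}\to\mathbb{R}^{d_K}$, a map $D_1:\mathbb{R}^{d_K}\to\mathbb{R}^{p}$, and a map $D_2$ assigning to every finite sequence of tokens (rows in $\mathbb{R}^{d_{in}}$) a vector in $\mathbb{R}^{p}$, such that there is a map $D_2^{*}$ on finite token sequences with $D_2([A;B]) - D_2(B) = D_2^{*}(A)$ for all finite token sequences $A, B$. For a token sequence $Y = [Y_1,\dots,Y_n]^T\in\mathbb{R}^{n\times d_{in}}$, bias matrix $b_{KV}\in\mathbb{R}^{d_K\times d_V}$ and bias vector $b_D\in\mathbb{R}^p$, define $Q_i = Y_iW_Q$, $K_i = Y_iW_K$, $V_i = Y_iW_V$ (viewed as column vectors) and, for $1\le i\le n$, the output at position $i$ by $$O_i(Y,b_{KV},b_D)^{T} = \frac{\big(R^{d_K}_{\Theta,i}\phi(Q_i)\big)^{T}\Big[\sum_{j=1}^{i}R^{d_K}_{\Theta,j}\phi(K_j)V_j^{T} + b_{KV}\Big]}{D_1(Q_i)^{T}\big(D_2([Y_1,\dots,Y_i]^T) + b_D\big)},$$ assuming the denominators are nonzero. Let $X' = [X'_1,\dots,X'_M]^T\in\mathbb{R}^{M\times d_{in}}$ be a fixed in-context prompt with $K'_j = X'_jW_K$, $V'_j = X'_jW_V$, and set $$b'_{KV} = R^{d_K}_{\Theta,-M}\,b_{KV}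 + \sum_{j=1}^{M}R^{d_K}_{\Theta,j-M}\,\phi(K'_j)V'^{T}_j,\qquad b'_D = b_D + D_2^{*}(X').$$ Then for every $N\ge1$, every $X = [X_1,\dots,X_N]^T\in\mathbb{R}^{N\times d_{in}}$ and every $1\le i\le N$, $$O_{M+i}([X';X],b_{KV},b_D) = O_i(X,b'_{KV},b'_D),$$ where $[X';X] = [X'_1,\dots,X'_M,X_1,\dots,X_N]^T$.
   Context: Rotary matrix: for $\Theta = \{\theta_k = 10000^{-2(k-1)/d_K} : k = 1,\dots,d_K/2\}$ and an integer $m$, $R^{d_K}_{\Theta,m}$ is the $d_K\times d_K$ block-diagonal matrix whose $k$-th $2\times 2$ diagonal block is $\begin{pmatrix}\cos m\theta_k & -\sin m\theta_k\\ \sin m\theta_k & \cos m\theta_k\end{pmatrix}$. The defined $O_i$ is a causally masked (autoregressive) linearized attention layer with rotary positional encoding, augmented with a Key-Value bias $b_{KV}$ added to the Key-Value sum and a bias $b_D$ added to the normalizing term. The separation property of $D_2$ is the paper's standing assumption for this result (it holds e.g. for $D_2\equiv 1$ with $D_1\equiv1$, and for $D_2(Y)=\sum_j\phi(Y_jW_K)$ with $D_1=\phi$). *)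

(* Defs.v *)
From HB Require Import structures.
From mathcomp Require Import all_boot all_order all_algebra.
From mathcomp Require Import all_classical all_reals all_analysis.
Set Implicit Arguments. Unset Strict Implicit. Unset Printing Implicit Defensive.
Import Order.TTheory GRing.Theory Num.Theory.
Local Open Scope ring_scope.

Section Rope.
Variable R : realType.

(* d_K = 2 * h.  theta k (0-based k = paper's k-1) = 10000^(-2k/d_K). *)
Definition rope_theta (h : nat) (k : nat) : R :=
  10000 `^ (- ((2 * k)%:R / (2 * h)%:R)).

(* Rotary matrix R^{d_K}_{Theta,m}, d_K = (2*h)%N, block-diagonal with
   2x2 blocks [[cos m th_k, - sin m th_k]; [sin m th_k, cos m th_k]]. *)
Definition rotary (h : nat) (m : int) : 'M[R]_(2 * h) :=
  \matrix_(a, b)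
    (if (a %/ 2 == b %/ 2)%N then
       let t := m%:~R * rope_theta h (a %/ 2) in
       match odd a, odd b with
       | false, false => cos t
       | false, true  => - sin t
       | true, false  => sin t
       | true, true   => cos t
       end
     else 0).

Definition tokens (n din : nat) (Y : 'M[R]_(n, din)) : seq 'rV[R]_din :=
  [seq row j Y | j <- enum 'I_n].

(* Linearized causal attention with RoPE and biases; returns O_i (a column
   vector of size dV); i : 'I_n is 0-based, paper position i.+1. *)
Definition attn_out (din h dV p : nat)
    (WQ WK : 'M[R]_(din, 2 * h)) (WV : 'M[R]_(din, dV))
    (phi : 'cV[R]_(2 * h) -> 'cV[R]_(2 * h))
    (D1 : 'cV[R]_(2 * h) -> 'cV[R]_p)
    (D2 : seq 'rV[R]_din -> 'cV[R]_p)
    (n : nat) (Y : 'M[R]_(n, din)) (bKV : 'M[R]_(2 * h, dV)) (bD : 'cV[R]_p)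
    (i : 'I_n) : 'cV[R]_dV :=
  let Q := fun j : 'I_n => (row j Y *m WQ)^T in
  let K := fun j : 'I_n => (row j Y *m WK)^T in
  let V := fun j : 'I_n => (row j Y *m WV)^T in
  let num : 'M[R]_(1, dV) :=
    (rotary h (i.+1)%:Z *m phi (Q i))^T *m
      (\sum_(j < n | (j <= i)%N) rotary h (j.+1)%:Z *m phi (K j) *m (V j)^T
       + bKV) in
  let den : R :=
    ((D1 (Q i))^T *m (D2 (take i.+1 (tokens Y)) + bD)) 0 0 in
  (den^-1 *: num)^T.

End Rope.
Arguments rotary {R} h m.
Arguments rope_theta {R} h k.

(* Main.v *)
Set Warnings "-all".
Require Import Defs.
From HB Require Import structures.
From mathcomp Require Import all_boot all_order all_algebra.
From mathcomp Require Import all_classical all_reals all_analysis.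
From mathcomp Require Import zify ring lra.
Import Order.TTheory GRing.Theory Num.Theory.
Local Open Scope ring_scope.

Lemma rotary_tr (R : realType) h (m : int) : (@rotary R h m)^T = rotary h (- m).
Proof.
apply/matrixP => a c; rewrite !mxE eq_sym.
case: eqP => // e; rewrite e rmorphN mulNr /=.
by case: (odd a); case: (odd c); rewrite ?cosN ?sinN ?opprK.
Qed.

Lemma rotaryM (R : realType) h (m n : int) :
  @rotary R h m *m rotary h n = rotary h (m + n).
Proof.
apply/matrixP => a c; rewrite !mxE.
set k := (a %/ 2)%N.
have ha := ltn_ord a.
have hk : (2*k < 2*h)%N by rewrite /k; lia.
have hk1 : (2*k+1 < 2*h)%N by rewrite /k; lia.
pose b0 := Ordinal hk; pose b1 := Ordinal hk1.
rewrite (bigD1 b0) // (bigD1 b1) /=; last by apply/eqP => /(congr1 val) /=; lia.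
rewrite big1 ?addr0; last first.
  move=> b /andP [hb1 hb0]; rewrite !mxE.
  case: eqP => [hb|]; last by rewrite mul0r.
  exfalso; move/eqP: hb1; apply; apply/val_inj => /=.
  move/eqP: hb0 => hb0.
  have : ((b:nat) = 2 * k \/ (b:nat) = 2*k+1)%N by rewrite /k in hb *; lia.
  case=> // hb'; exfalso; apply: hb0; exact: val_inj.
rewrite !mxE /=.
have e0 : ((2*k) %/ 2 = k)%N by lia.
have e1 : ((2*k+1) %/ 2 = k)%N by lia.
have o0 : odd (2*k) = false by rewrite oddM.
have o1 : odd (2*k+1) = true by rewrite addn1 /= oddM.
rewrite e0 e1 o0 o1 eqxx /=.
case: eqP => [ec|_]; last by rewrite !mulr0 addr0.
have oa : (odd a = false /\ (a:nat) = 2*k \/ odd a = true /\ (a:nat) = 2*k+1)%N.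
  rewrite /k; case: (boolP (odd a)) => oa; [right|left]; split => //; lia.
rewrite rmorphD mulrDl /= -/k.
case: oa => [[-> _]|[-> _]]; case: (odd c);
  rewrite ?cosD ?sinD; ring.
Qed.
Lemma size_tokens (R : realType) n din (Y : 'M[R]_(n, din)) : size (tokens Y) = n.
Proof. by rewrite /tokens size_map size_enum_ord. Qed.

Lemma tokens_col (R : realType) m n din (A : 'M[R]_(m, din)) (B : 'M[R]_(n, din)) :
  tokens (col_mx A B) = tokens A ++ tokens B.
Proof.
apply: (@eq_from_nth _ 0); first by rewrite size_cat !size_tokens.
rewrite size_tokens => j hj.
rewrite nth_cat size_tokens /tokens.
rewrite (nth_map (Ordinal hj)) ?size_enum_ord //.
have -> : nth (Ordinal hj) (enum 'I_(m + n)) j = Ordinal hj.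
  by apply: val_inj; rewrite /= nth_enum_ord.
case: ltnP => hjm.
  rewrite (nth_map (Ordinal hjm)) ?size_enum_ord //.
  have -> : nth (Ordinal hjm) (enum 'I_m) j = Ordinal hjm.
    by apply: val_inj; rewrite /= nth_enum_ord.
  have -> : Ordinal hj = lshift n (Ordinal hjm) by apply: val_inj.
  by rewrite rowKu.
have hjn : (j - m < n)%N by lia.
rewrite (nth_map (Ordinal hjn)) ?size_enum_ord //.
have -> : nth (Ordinal hjn) (enum 'I_n) (j - m) = Ordinal hjn.
  by apply: val_inj; rewrite /= nth_enum_ord.
have -> : Ordinal hj = rshift m (Ordinal hjn) by apply: val_inj => /=; lia.
by rewrite rowKd.
Qed.

Theorem theorem4p5 (R : realType) (din dV p M h : nat)
    (hdin : (0 < din)%N) (hdV : (0 < dV)%N) (hp : (0 < p)%N)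
    (hM : (0 < M)%N) (hh : (0 < h)%N)
    (WQ WK : 'M[R]_(din, 2 * h)) (WV : 'M[R]_(din, dV))
    (phi : 'cV[R]_(2 * h) -> 'cV[R]_(2 * h))
    (D1 : 'cV[R]_(2 * h) -> 'cV[R]_p)
    (D2 D2star : seq 'rV[R]_din -> 'cV[R]_p)
    (hsep : forall A B : seq 'rV[R]_din, D2 (A ++ B) - D2 B = D2star A)
    (bKV : 'M[R]_(2 * h, dV)) (bD : 'cV[R]_p)
    (X' : 'M[R]_(M, din)) :
  let bKV' : 'M[R]_(2 * h, dV) :=
    rotary h (- (M%:Z)) *m bKV
    + \sum_(j < M) rotary h ((j.+1)%:Z - M%:Z)
                   *m phi ((row j X' *m WK)^T) *m ((row j X' *m WV)^T)^T in
  let bD' : 'cV[R]_p := bD + D2star (tokens X') in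
  forall (N : nat) (X : 'M[R]_(N, din)) (i : 'I_N),
    attn_out WQ WK WV phi D1 D2 (col_mx X' X) bKV bD (rshift M i)
    = attn_out WQ WK WV phi D1 D2 X bKV' bD' i.
Proof.
move=> bKV' bD' N X i.
rewrite /attn_out /= rowKd.
have hden : D2 (take (M + i).+1 (tokens (col_mx X' X))) + bD
    = D2 (take i.+1 (tokens X)) + bD'.
  rewrite tokens_col take_cat size_tokens.
  have -> : ((M + i).+1 < M)%N = false by lia.
  have -> : ((M + i).+1 - M = i.+1)%N by lia.
  have := hsep (tokens X') (take i.+1 (tokens X)).
  move/eqP; rewrite subr_eq => /eqP ->.
  by rewrite /bD' -addrA addrC -addrA.
rewrite hden; congr ((_ ^-1 *: _)^T).
set v := phi _.
rewrite !trmx_mul !rotary_tr.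
have -> : @rotary R h (- (M + i).+1%:Z) = rotary h (- i.+1%:Z) *m rotary h (- M%:Z).
  by rewrite rotaryM; congr rotary; lia.
rewrite -!mulmxA; congr (_ *m (_ *m _)).
rewrite mulmxDr /bKV' addrC [in RHS]addrC -addrA; congr (_ + _).
rewrite mulmx_sumr big_split_ord /=; congr (_ + _).
  rewrite (eq_bigl xpredT); last by move=> j /=; have := ltn_ord j; lia.
  apply: eq_bigr => j _.
  by rewrite rowKu !mulmxA rotaryM; congr (rotary _ _ *m _ *m _); lia.
apply: eq_big => [j|j _] /=; first by rewrite leq_add2l.
by rewrite rowKd !mulmxA rotaryM; congr (rotary _ _ *m _ *m _); lia.
Qed.
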